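(* Let $\mu_1,\mu_2$ be two mass distributions in $\mathbb{R}^2$ and let $q$ be a point of $\mathbb{R}^2$. Then there exist two lines $\ell_1,\ell_2$ such that $\{\ell_1,\ell_2\}$ simultaneously bisects $\mu_1,\mu_2$, and both $\ell_1$ and $\ell_2$ go through $q$.
   Context: A mass distribution $\mu$ on $\mathbb{R}^2$ is a measure such that all open subsets are measurable, $0<\mu(\mathbb{R}^2)<\infty$, and $\mu(S)=0$ for every lower-dimensional subset $S$. For a finite set $\mathcal{L}$ of oriented lines, each $\ell\in\mathcal{L}$ has positive side $\ell^+=\{x: g(x)\ge 0\}$ for a defining affine function $g$. Let $\lambda(p)$ be the number of lines of $\mathcal{L}$ having $p$ on their positive side, $R^+=\{p:\lambda(p)\text{ even}\}$, $R^-=\{p:\lambda(p)\text{ odd}\}$. $\mathcal{L}$ simultaneously bisects $\mu_1,\dots,\mu_k$ if $\mu_i(R^+)=\mu_i(R^-)$ for all $i$; an unoriented set of lines bisects if some orientation does. *)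

(* Defs.v *)
From HB Require Import structures.
From mathcomp Require Import all_boot all_order all_algebra.
From mathcomp Require Import all_classical all_reals all_analysis.
Set Implicit Arguments. Unset Strict Implicit. Unset Printing Implicit Defensive.
Import Order.TTheory GRing.Theory Num.Theory.
Local Open Scope classical_set_scope.
Local Open Scope ring_scope.

Section Defs.
Variable R : realType.

(* An oriented line is given by a defining affine function
   g(x) = a x_1 + b x_2 + c with (a,b) <> (0,0); we store (a,b,c). *)
Definition aff (l : R * R * R) (x : R * R) : R :=
  l.1.1 * x.1 + l.1.2 * x.2 + l.2.

Definition nondeg (l : R * R * R) : Prop := (l.1.1, l.1.2) <> (0, 0).

Definition line_set (l : R * R * R) : set (R * R) := [set x | aff l x = 0].

Definition pos_side (l : R * R * R) : set (R * R) := [set x | 0 <= aff l x].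

(* lambda(p) for the finite set of oriented lines {l1, l2}: if l1 and l2 have
   the same underlying line, the set has a single element (oriented as l1). *)
Definition lambda2 (l1 l2 : R * R * R) (p : R * R) : nat :=
  (asbool (pos_side l1 p) +
   (if asbool (line_set l1 = line_set l2) then 0 else asbool (pos_side l2 p)))%N.

Definition Rplus2 l1 l2 : set (R * R) := [set p | ~~ odd (lambda2 l1 l2 p)].
Definition Rminus2 l1 l2 : set (R * R) := [set p | odd (lambda2 l1 l2 p)].

Definition bisects2 (mu : set (R * R) -> \bar R) l1 l2 : Prop :=
  mu (Rplus2 l1 l2) = mu (Rminus2 l1 l2).

Definition mass_distribution (mu : {measure set (R * R) -> \bar R}) : Prop :=
  [/\ (forall A : set (R^o * R^o), open A -> measurable (A : set (R * R))),
      (0 < mu setT)%E, (mu setT < +oo)%E &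
      (* lower-dimensional subsets: points and lines *)
      (forall S : set (R * R),
          ((exists l, nondeg l /\ S `<=` line_set l) \/ (exists x, S = [set x])) ->
          measurable S -> mu S = 0%E)].
End Defs.

(* Main.v *)
Require Import Defs.
From HB Require Import structures.
From mathcomp Require Import all_boot all_order all_algebra.
From mathcomp Require Import all_classical all_reals all_analysis.
From mathcomp Require Import ring lra measurable_realfun.
Set Implicit Arguments. Unset Strict Implicit. Unset Printing Implicit Defensive.
Import Order.TTheory GRing.Theory Num.Theory.
Import numFieldNormedType.Exports.
Local Open Scope classical_set_scope.
Local Open Scope ring_scope.
Section R1.
Variable R : realType.

Lemma ed_cont (f : R -> R) :
  (forall x e, 0 < e -> exists2 d, 0 < d & forall y, `|x - y| < d -> `|f x - f y| < e) ->
  continuous f.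
Proof.
move=> H x; apply/cvgrPdist_lt => e e0.
have [d d0 Hd] := H x e e0.
exists d => //= y; rewrite /ball /=; exact: Hd.
Qed.

Lemma lip_abs (f : R -> R) :
  (forall v w, v <= w -> 0 <= f w - f v <= w - v) ->
  forall x y, `|f x - f y| <= `|x - y|.
Proof.
move=> H x y; case: (leP x y) => hxy.
  have /andP[h1 h2] := H _ _ hxy.
  rewrite ler0_norm ?ler0_norm; lra.
have /andP[h1 h2] := H _ _ (ltW hxy).
rewrite ger0_norm ?ger0_norm; lra.
Qed.

Definition cl (b v : R) := if v < 0 then 0 else if b < v then b else v.

Lemma cl_lip b : 0 <= b -> forall v w, v <= w -> 0 <= cl b w - cl b v <= w - v.
Proof.
move=> b0 v w vw; rewrite /cl.
case: (ltP v 0) => h1; case: (ltP b v) => h2; case: (ltP w 0) => h3;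
  case: (ltP b w) => h4; apply/andP; split; lra.
Qed.

Lemma cl_in b : 0 <= b -> forall v, 0 <= cl b v <= b.
Proof.
move=> b0 v; rewrite /cl.
case: (ltP v 0) => h1; case: (ltP b v) => h2; apply/andP; split; lra.
Qed.

Lemma cl_id b v : 0 <= v <= b -> cl b v = v.
Proof.
move=> /andP[h1 h2]; rewrite /cl.
case: (ltP v 0) => h3; first lra.
case: (ltP b v) => h4; lra.
Qed.

Lemma mm (u w : R) : w = - u -> Num.min u w <= 0 <= Num.max u w.
Proof.
move=> ->. rewrite ge_min le_max oppr_le0 oppr_ge0.
case: (leP u 0) => hh /=; rewrite ?(ltW hh) ?orbT //.
Qed.

Lemma oneD (d1 d2 : R -> R) :
  (forall x y, 0 <= x -> x <= y -> y <= 1 -> d1 x <= d1 y) ->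
  (forall x y, 0 <= x -> x <= y -> y <= 1 -> d2 x <= d2 y) ->
  d1 0 = 0 -> d2 0 = 0 -> d1 1 = 1 -> d2 1 = 1 ->
  (forall x e, 0 <= x <= 1 -> 0 < e -> exists2 d, 0 < d &
      forall y, 0 <= y <= 1 -> `|x - y| < d -> `|d1 x - d1 y| < e /\ `|d2 x - d2 y| < e) ->
  exists a b, [/\ 0 <= a, a < b, b <= 1, (a, b) <> (0, 1)
     & d1 b - d1 a = 2^-1 /\ d2 b - d2 a = 2^-1].
Proof.
move=> m1 m2 d10 d20 d11 d21 cd.
pose s x := d1 x + d2 x.
have ms x y : 0 <= x -> x <= y -> y <= 1 -> s x <= s y.
  by move=> *; rewrite /s lerD //; [apply: m1 | apply: m2].
have K x y : 0 <= x <= 1 -> 0 <= y <= 1 -> s x <= s y ->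
    0 <= d1 y - d1 x <= s y - s x.
  move=> /andP[x0 x1] /andP[y0 y1]; rewrite /s => sxy.
  case: (leP x y) => hxy.
    have := m1 _ _ x0 hxy y1; have := m2 _ _ x0 hxy y1 => *.
    apply/andP; split; lra.
  have := m1 _ _ y0 (ltW hxy) x1; have := m2 _ _ y0 (ltW hxy) x1 => *.
  apply/andP; split; lra.
pose sc v := s (cl 1 v).
have csc : continuous sc.
  apply: ed_cont => x e e0.
  have e20 : 0 < e / 2 by rewrite divr_gt0.
  have [d d0 Hd] := cd (cl 1 x) (e / 2) (cl_in ler01 x) e20.
  exists d => // y xy.
  have := Hd (cl 1 y) (cl_in ler01 y).
  have := lip_abs (cl_lip ler01) x y => hl.
  case; first by apply: le_lt_trans hl xy.
  move=> h1 h2; rewrite /sc /s.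
  apply: (le_lt_trans (y := `|d1 (cl 1 x) - d1 (cl 1 y)| + `|d2 (cl 1 x) - d2 (cl 1 y)|)).
    have -> : d1 (cl 1 x) + d2 (cl 1 x) - (d1 (cl 1 y) + d2 (cl 1 y)) =
       (d1 (cl 1 x) - d1 (cl 1 y)) + (d2 (cl 1 x) - d2 (cl 1 y)) by ring.
    exact: ler_normD.
  lra.
have surj v : exists t, 0 <= v <= 2 -> 0 <= t <= 1 /\ s t = v.
  case: (boolP (0 <= v <= 2)) => hv; last by exists 0.
  have [|t t01 st] := @IVT R sc 0 1 v ler01 (continuous_subspaceT csc).
    rewrite /sc !cl_id ?lexx ?ler01 // /s d10 d20 d11 d21.
    rewrite ge_min le_max; apply/andP; split; apply/orP; [left|right]; lra.
  exists t => _; move: t01; rewrite in_itv /= => t01; split => //.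
  by rewrite -st /sc cl_id.
have [al Hal] := choice surj.
pose e v := d1 (al (cl 2 v)).
have le2 : (0:R) <= 2 by [].
have me v w : v <= w -> 0 <= e w - e v <= w - v.
  move=> vw; have := cl_lip le2 vw => /andP[c1 c2].
  have [h1 h2] := Hal _ (cl_in le2 v).
  have [h3 h4] := Hal _ (cl_in le2 w).
  have := K _ _ h1 h3; rewrite h2 h4 => /(_ ltac:(lra)) /andP[k1 k2].
  rewrite /e; apply/andP; split; lra.
pose g v := e (v + 1) - e v - 2^-1.
have cg : continuous g.
  apply: ed_cont => x eps e0.
  exists (eps / 2); first by rewrite divr_gt0.
  move=> y xy.
  have l1 := lip_abs me (x + 1) (y + 1).
  have l2 := lip_abs me x y.
  rewrite /g.
  have -> : e (x + 1) - e x - 2^-1 - (e (y + 1) - e y - 2^-1) =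
    (e (x + 1) - e (y + 1)) - (e x - e y) by ring.
  apply: (le_lt_trans (ler_normB _ _)).
  move: l1; rewrite (_ : x + 1 - (y + 1) = x - y) => [l1|]; last by ring.
  lra.
have e0 : e 0 = 0.
  have c0 : 0 <= (0:R) <= 2 by rewrite lexx le2.
  have [h1 h2] := Hal _ c0.
  rewrite /e (cl_id c0).
  move/andP: h1 => [a0 a1].
  have := m1 _ _ (lexx 0) a0 a1; have := m2 _ _ (lexx 0) a0 a1.
  rewrite /s in h2; lra.
have e2 : e 2 = 1.
  have c0 : 0 <= (2:R) <= 2 by rewrite lexx le2.
  have [h1 h2] := Hal _ c0.
  rewrite /e (cl_id c0).
  move/andP: h1 => [a0 a1].
  have := m1 _ _ a0 a1 (lexx 1); have := m2 _ _ a0 a1 (lexx 1).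
  rewrite /s in h2; lra.
have [|c c01 gc] := @IVT R g 0 1 0 ler01 (continuous_subspaceT cg).
  apply: mm; rewrite /g add0r (_ : 1 + 1 = 2 :> R) // e0 e2; clearbody e; lra.
move: c01; rewrite in_itv /= => /andP[c0 c1].
have hc : 0 <= c <= 2 by apply/andP; split; lra.
have hc1 : 0 <= c + 1 <= 2 by apply/andP; split; lra.
have [h1 h2] := Hal _ hc.
have [h3 h4] := Hal _ hc1.
move: gc; rewrite /g /e !cl_id // => gc.
exists (al c), (al (c + 1)).
move/andP: h1 => [a0 a1]; move/andP: h3 => [b0 b1].
have ab : al c < al (c + 1).
  case: (ltP (al c) (al (c + 1))) => // hh.
  have := ms _ _ b0 hh a1; lra.
split => //.
  case=> ha hb; move: h2 h4; rewrite ha hb /s d10 d20 d11 d21; lra.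
split; first lra.
move: h2 h4; rewrite /s; lra.
Qed.
End R1.
Section Geo.
Variable R : realType.
Variable q : R * R.

Definition n1 (t : R) := 1 - 2 * t.
Definition n2 (t : R) := t * (1 - t).
Definition Lt (t : R) : R * R * R := ((n1 t, n2 t), - (n1 t * q.1 + n2 t * q.2)).
Definition G t x := aff (Lt t) x.
Definition Wm a b := [set x | (0 <= G a x) != (0 <= G b x)].

Lemma GE t x : G t x = n1 t * (x.1 - q.1) + n2 t * (x.2 - q.2).
Proof. rewrite /G /aff /Lt /=; ring. Qed.

Lemma Lt_q t : aff (Lt t) q = 0.
Proof. rewrite /aff /Lt /=; ring. Qed.

Lemma Lt_nondeg t : nondeg (Lt t).
Proof.
rewrite /nondeg /Lt /= /n1 /n2 => -[h1 h2].
have ht : t = 2^-1 by lra.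
move: h2; rewrite ht; lra.
Qed.

Definition det a b := n1 a * n2 b - n2 a * n1 b.

Lemma detE a b : det a b = (b - a) * ((1 - a) * (1 - b) + a * b).
Proof. rewrite /det /n1 /n2; ring. Qed.

Lemma det_ge0 a b : 0 <= a -> a <= b -> b <= 1 -> 0 <= det a b.
Proof.
move=> *; rewrite detE; apply: mulr_ge0; first lra.
apply: addr_ge0; apply: mulr_ge0; lra.
Qed.

Lemma det_gt0 a b : 0 <= a -> a < b -> b <= 1 -> (a, b) <> (0, 1) -> 0 < det a b.
Proof.
move=> a0 ab b1 nab; rewrite detE; apply: mulr_gt0; first lra.
case: (ltP 0 a) => ha.
  apply: ltr_pwDr; first by apply: mulr_gt0; lra.
  apply: mulr_ge0; lra.
have a0' : a = 0 by lra.
case: (ltP b 1) => hb.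
  apply: ltr_pwDl; first by apply: mulr_gt0; lra.
  apply: mulr_ge0; lra.
by exfalso; apply: nab; rewrite a0'; congr pair; lra.
Qed.

Lemma Gid a b c x : det a c * G b x = det b c * G a x + det a b * G c x.
Proof. rewrite !GE /det /n1 /n2; ring. Qed.

Lemma G1 x : G 1 x = - G 0 x.
Proof. rewrite !GE /n1 /n2; ring. Qed.

Lemma lines_distinct a b : 0 <= a -> a < b -> b <= 1 -> (a, b) <> (0, 1) ->
  line_set (Lt a) <> line_set (Lt b).
Proof.
move=> a0 ab b1 nab E.
pose p : R * R := (q.1 - n2 a, q.2 + n1 a).
have : line_set (Lt a) p by rewrite /line_set /= -/(G a p) GE /p /=; ring.
rewrite E /line_set /= -/(G b p) GE /p /=.
have := det_gt0 a0 ab b1 nab; rewrite /det => h1 h2; lra.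
Qed.

Lemma Rminus2E a b : line_set (Lt a) <> line_set (Lt b) ->
  Rminus2 (Lt a) (Lt b) = Wm a b.
Proof.
move=> nE; rewrite /Rminus2 /Wm /lambda2 /pos_side; apply/seteqP; split => x /=;
  rewrite (asboolF nE) !asboolb oddD !oddb -/(G a x) -/(G b x);
  by case: (0 <= G a x); case: (0 <= G b x).
Qed.

Lemma Rplus2E a b : line_set (Lt a) <> line_set (Lt b) ->
  Rplus2 (Lt a) (Lt b) = ~` Wm a b.
Proof.
move=> nE; rewrite /Rplus2 /Wm /lambda2 /pos_side; apply/seteqP; split => x /=;
  rewrite (asboolF nE) !asboolb oddD !oddb -/(G a x) -/(G b x);
  by case: (0 <= G a x); case: (0 <= G b x).
Qed.

Lemma Wm_sym a b : Wm a b = Wm b a.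
Proof. by rewrite /Wm; apply/seteqP; split => x /=; rewrite eq_sym. Qed.

Definition L0 := [set x | G 0 x = 0].

Lemma Wm_inter a b x : 0 <= a -> a <= b -> b <= 1 ->
  Wm 0 a x -> Wm a b x -> G 0 x = 0.
Proof.
rewrite /Wm /= => a0 ab b1 h1 h2.
have h3 : (0 <= G 0 x) = (0 <= G b x).
  by move: h1 h2; case: (0 <= G 0 x); case: (0 <= G a x); case: (0 <= G b x).
case: (ltP b 1) => hb1; last first.
  have eb : b = 1 by lra.
  move: h3; rewrite eb G1 oppr_ge0 => h3.
  case: (leP 0 (G 0 x)) h3 => hh; last by rewrite (ltW hh).
  by move=> /esym hh2; apply/eqP; rewrite eq_le hh hh2.
case: (ltP 0 b) => hb0; last first.
  have b0 : b = 0 by lra.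
  have aa : a = 0 by lra.
  by move: h1; rewrite aa eqxx.
have hab : a < b.
  case: (ltP a b) => // hh; have ee : a = b by lra.
  by move: h2; rewrite ee eqxx.
have d0b : 0 < det 0 b.
  by apply: det_gt0; [exact: lexx | exact: hb0 | lra | move=> /(congr1 snd) /= hh; lra].
have dab : 0 < det a b.
  by apply: det_gt0; [exact: a0 | exact: hab | lra | move=> /(congr1 snd) /= hh; lra].
have d0a : 0 <= det 0 a by apply: det_ge0 => //; lra.
have hid := Gid 0 a b x.
case: (leP 0 (G 0 x)) h1 h3 => g0; case: (leP 0 (G a x)) => ga;
  case: (leP 0 (G b x)) => gb //= _ _; exfalso.
  have : det 0 b * G a x < 0 by rewrite pmulr_rlt0.
  have : 0 <= det a b * G 0 x by apply: mulr_ge0; lra.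
  have : 0 <= det 0 a * G b x by apply: mulr_ge0; lra.
  lra.
have : 0 <= det 0 b * G a x by apply: mulr_ge0; lra.
have : det a b * G 0 x < 0 by rewrite pmulr_rlt0.
have : det 0 a * G b x <= 0 by apply: mulr_ge0_le0; lra.
lra.
Qed.

Lemma Wm01 x : ~ Wm 0 1 x -> G 0 x = 0.
Proof.
rewrite /Wm /= G1 oppr_ge0 => /negP; rewrite negbK.
case: (leP 0 (G 0 x)) => hh.
  by move/eqP => /esym hh2; apply/eqP; rewrite eq_le hh hh2.
by move/eqP; rewrite (ltW hh).
Qed.

End Geo.
Section Meas.
Variable R : realType.
Variable q : R * R.
Variable mu : {measure set (R * R) -> \bar R}.
Hypothesis Hmu : mass_distribution mu.

Local Notation G := (G q).
Local Notation Wm := (Wm q).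

Lemma mG t : measurable_fun setT (G t).
Proof.
rewrite (_ : G t = (fun x => n1 t * x.1) \+ (fun x => n2 t * x.2) \+ cst (- (n1 t * q.1 + n2 t * q.2))); last first.
  by apply: funext => x; rewrite /G /aff /Lt.
apply: measurable_funD; [apply: measurable_funD|exact: measurable_cst];
  (apply: measurable_funM; [exact: measurable_cst| ]); [exact: measurable_fst|exact: measurable_snd].
Qed.

Lemma mP t : measurable [set x | 0 <= G t x].
Proof.
move: (measurable_fun_ler (@measurable_cst _ _ _ _ setT (0 : R)) (mG t)).
by move=> /(_ measurableT [set true]); rewrite setTI; apply.
Qed.

Lemma mLn t : measurable [set x | G t x = 0].
Proof.
move: (measurable_fun_eqr (mG t) (@measurable_cst _ _ _ _ setT (0 : R))).
move=> /(_ measurableT [set true]); rewrite setTI => /(_ ltac:(by [])).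
congr measurable; apply/seteqP; split => x /= /eqP //.
Qed.

Lemma mWm a b : measurable (Wm a b).
Proof.
rewrite (_ : Wm a b = ([set x | 0 <= G a x] `\` [set x | 0 <= G b x]) `|`
   ([set x | 0 <= G b x] `\` [set x | 0 <= G a x])).
  by apply: measurableU; apply: measurableD; apply: mP.
rewrite /Wm; apply/seteqP; split => x /=.
  case: (boolP (0 <= G a x)) => ha; case: (boolP (0 <= G b x)) => hb //= _;
    [left|right]; split => //; exact/negP.
move=> [[ha hb]|[hb ha]].
  by move/negP: hb => /negbTE ->; rewrite ha.
by move/negP: ha => /negbTE ->; rewrite hb.
Qed.
End Meas.
From HB Require Import structures.
From mathcomp Require Import all_boot all_order all_algebra.
From mathcomp Require Import all_classical all_reals all_analysis.
From mathcomp Require Import ring lra measurable_realfun.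
Set Implicit Arguments. Unset Strict Implicit. Unset Printing Implicit Defensive.
Import Order.TTheory GRing.Theory Num.Theory.
Import numFieldNormedType.Exports.
Local Open Scope classical_set_scope.
Local Open Scope ring_scope.

Section Meas2.
Variable R : realType.
Variable q : R * R.
Variable mu : {measure set (R * R) -> \bar R}.
Hypothesis Hmu : mass_distribution mu.

Local Notation G := (G q).
Local Notation Wm := (Wm q).

Lemma muLn t : mu [set x | G t x = 0] = 0%E.
Proof.
case: Hmu => _ _ _ H0; apply: H0; last exact: mLn.
by left; exists (Lt q t); split; [exact: Lt_nondeg | move=> x].
Qed.

Lemma mufin A : measurable A -> mu A = (fine (mu A))%:E.
Proof.
move=> mA; case: Hmu => _ _ Hfin _.
rewrite fineK // ge0_fin_numE ?measure_ge0 //.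
apply: le_lt_trans Hfin.
exact: (@le_measure _ _ _ mu A setT (mem_set mA) (mem_set measurableT) (@subsetT _ A)).
Qed.

Lemma null_eq A B N : measurable A -> measurable B -> measurable N ->
  A `<=` B -> B `\` A `<=` N -> mu N = 0%E -> mu A = mu B.
Proof.
move=> mA mB mN AB BAN N0.
rewrite (@measureDI _ _ _ mu B A mB mA).
rewrite (@subset_measure0 _ _ _ mu (B `\` A) N (measurableD mB mA) mN BAN N0).
by rewrite add0e setIC setIidl.
Qed.

Lemma null_union A B N : measurable A -> measurable B -> measurable N ->
  A `&` B `<=` N -> mu N = 0%E -> mu (A `|` B) = (mu A + mu B)%E.
Proof.
move=> mA mB mN ABN N0.
rewrite -[A `|` B](_ : A `|` (B `\` A) = _); last by rewrite setUDr setDv setD0.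
rewrite measureU //; last 2 first.
- exact: measurableD.
- by rewrite setDIK.
congr (_ + _)%E.
rewrite [in RHS](@measureDI _ _ _ mu B A mB mA).
rewrite [X in _ = (_ + X)%E](@subset_measure0 _ _ _ mu (B `&` A) N (measurableI _ _ mB mA) mN) ?adde0 //.
by rewrite setIC.
Qed.

Lemma Dadd a b : 0 <= a -> a <= b -> b <= 1 ->
  mu (Wm 0 b) = (mu (Wm 0 a) + mu (Wm a b))%E.
Proof.
move=> a0 ab b1.
have hN : Wm 0 a `&` Wm a b `<=` [set x | G 0 x = 0].
  by move=> x [h1 h2]; exact: (Wm_inter a0 ab b1 h1 h2).
rewrite -(null_union (mWm q 0 a) (mWm q a b) (mLn q 0) hN (muLn 0)).
apply: (null_eq (mWm q 0 b) _ (mLn q 0)).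
- exact: measurableU (mWm q 0 a) (mWm q a b).
- rewrite /Wm => x /=.
  by case: (0 <= G 0 x); case: (0 <= G a x); case: (0 <= G b x) => //= _; by [left|right].
- move=> x [hx hn]; apply: hN.
  move: hx hn; rewrite /Wm /=.
  case: (0 <= G 0 x); case: (0 <= G a x); case: (0 <= G b x) => //=; try tauto.
- exact: muLn.
Qed.

Lemma D0 : mu (Wm 0 0) = 0%E.
Proof.
rewrite (_ : Wm 0 0 = set0) ?measure0 //.
by rewrite /Wm; apply/seteqP; split => x //=; rewrite eqxx.
Qed.

Lemma D1 : mu (Wm 0 1) = mu setT.
Proof.
apply: (null_eq (mWm q 0 1) measurableT (mLn q 0)) => //.
  by move=> x [_ hx]; exact: Wm01.
exact: muLn.
Qed.

Lemma muC a b : mu (~` Wm a b) = (mu setT - mu (Wm a b))%E.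
Proof.
rewrite -setTD measureD //; last by case: Hmu.
  by rewrite setTI.
exact: mWm.
Qed.

End Meas2.
From HB Require Import structures.
From mathcomp Require Import all_boot all_order all_algebra.
From mathcomp Require Import all_classical all_reals all_analysis.
From mathcomp Require Import ring lra measurable_realfun.
Set Implicit Arguments. Unset Strict Implicit. Unset Printing Implicit Defensive.
Import Order.TTheory GRing.Theory Num.Theory.
Import numFieldNormedType.Exports.
Local Open Scope classical_set_scope.
Local Open Scope ring_scope.

Section Meas3.
Variable R : realType.
Variable q : R * R.
Variable mu : {measure set (R * R) -> \bar R}.
Hypothesis Hmu : mass_distribution mu.

Local Notation G := (G q).
Local Notation Wm := (Wm q).

Lemma Gdiff x y z : 0 <= x <= 1 -> 0 <= y <= 1 ->
  `|G y z - G x z| <= `|y - x| * (2 * `|z.1 - q.1| + `|z.2 - q.2|).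
Proof.
move=> /andP[x0 x1] /andP[y0 y1].
rewrite !GE.
have -> : n1 y * (z.1 - q.1) + n2 y * (z.2 - q.2) - (n1 x * (z.1 - q.1) + n2 x * (z.2 - q.2))
   = (y - x) * ((-2) * (z.1 - q.1) + (1 - x - y) * (z.2 - q.2)) by rewrite /n1 /n2; ring.
rewrite normrM ler_wpM2l //.
apply: le_trans (ler_normD _ _) _.
rewrite !normrM; apply: lerD.
  by apply: ler_wpM2r => //; rewrite ler_norml; apply/andP; split; lra.
rewrite -[X in _ <= X]mul1r; apply: ler_wpM2r => //.
rewrite ler_norml; apply/andP; split; lra.
Qed.

Lemma Wcont x eps : 0 <= x <= 1 -> 0 < eps -> exists2 d, 0 < d &
  forall y, 0 <= y <= 1 -> `|x - y| < d -> fine (mu (Wm x y)) < eps.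
Proof.
move=> hx e0; apply: contrapT => H.
have H' n : exists y, [/\ 0 <= y <= 1, `|x - y| < n.+1%:R^-1 & eps <= fine (mu (Wm x y))].
  apply: contrapT => Hn; apply: H; exists n.+1%:R^-1; first by rewrite invr_gt0 ltr0n.
  move=> y hy hxy; rewrite ltNge; apply/negP => he; apply: Hn; by exists y.
have [ys Hys] := choice H'.
pose A n := \bigcup_(k in [set k | (n <= k)%N]) Wm x (ys k).
have mA n : measurable (A n) by apply: bigcup_measurable => k _; exact: mWm.
have mI : measurable (\bigcap_n A n) by apply: bigcapT_measurable.
have nA : nonincreasing_seq A.
  move=> n m nm; apply/subsetPset => z [k /= hk hz]; exists k => //=; exact: leq_trans nm hk.
have fA0 : (mu (A 0%N) < +oo)%E by rewrite (mufin Hmu (mA 0%N)) ltey.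
have cv := nonincreasing_cvg_mu fA0 mA mI nA.
have I0 : mu (\bigcap_n A n) = 0%E.
  have SS := @subset_measure0 _ _ _ mu _ _ mI (mLn q x).

  apply: SS; last exact: muLn Hmu x.
  move=> z Hz /=; apply: contrapT => Gz.
  set C := 2 * `|z.1 - q.1| + `|z.2 - q.2|.
  have C0 : 0 <= C by rewrite /C; apply: addr_ge0 => //; apply: mulr_ge0.
  have g0 : 0 < `|G x z| by rewrite normr_gt0; apply/eqP.
  pose N := Num.bound (C / `|G x z|).
  have HN : C / `|G x z| < N%:R by apply: archi_boundP; apply: divr_ge0 => //; exact: ltW.
  have [k /= hk hz] := Hz N I.
  have [hy hxy _] := Hys k.
  have hd := Gdiff z hx hy.
  rewrite ltr_pdivrMr // in HN.
  have hK : (N%:R : R) <= k.+1%:R by rewrite ler_nat; apply: leqW.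
  have Kp : (0 : R) < k.+1%:R by rewrite ltr0n.
  have vK : `|ys k - x| * k.+1%:R < 1.
    by rewrite -ltr_pdivlMr // div1r distrC.
  have v0 : 0 <= `|ys k - x| by [].
  have lt : `|ys k - x| * C < `|G x z| by nra.
  have hlt : `|G (ys k) z - G x z| < `|G x z| by apply: le_lt_trans hd lt.
  move: hz hlt; rewrite /Wm /= ltr_norml.
  case: (leP 0 (G x z)) => ha.
    rewrite ger0_norm // => /negbTE; case: (leP 0 (G (ys k) z)) => // hb _; lra.
  rewrite ltr0_norm // => /negbTE; case: (leP 0 (G (ys k) z)) => // hb _; lra.
have : (eps%:E <= mu (\bigcap_n A n))%E.
  apply: (cvge_to_ge cv); apply: nearW => n.
  have [_ _ he] := Hys n.
  apply: (@le_trans _ _ (mu (Wm x (ys n)))).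
    by rewrite (mufin Hmu (mWm q x (ys n))) lee_fin.
  apply: le_measure; rewrite ?inE; [exact: mWm | exact: mA | move=> z hz; exists n => //=].
by rewrite I0 lee_fin; lra.
Qed.

End Meas3.
From HB Require Import structures.
From mathcomp Require Import all_boot all_order all_algebra.
From mathcomp Require Import all_classical all_reals all_analysis.
From mathcomp Require Import ring lra measurable_realfun.
Set Implicit Arguments. Unset Strict Implicit. Unset Printing Implicit Defensive.
Import Order.TTheory GRing.Theory Num.Theory.
Import numFieldNormedType.Exports.
Local Open Scope classical_set_scope.
Local Open Scope ring_scope.

Section Meas4.
Variable R : realType.
Variable q : R * R.
Variable mu : {measure set (R * R) -> \bar R}.
Hypothesis Hmu : mass_distribution mu.

Local Notation G := (G q).
Local Notation Wm := (Wm q).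

Definition TT := fine (mu setT).
Definition dd t := fine (mu (Wm 0 t)) / TT.

Lemma TT_gt0 : 0 < TT.
Proof.
case: Hmu => _ H0 _ _.
by move: H0; rewrite (mufin Hmu measurableT) lte_fin.
Qed.

Lemma fine_ge0' A : measurable A -> 0 <= fine (mu A).
Proof. by move=> mA; rewrite -lee_fin -(mufin Hmu mA) measure_ge0. Qed.

Lemma Wfine a b : 0 <= a -> a <= b -> b <= 1 ->
  fine (mu (Wm a b)) = fine (mu (Wm 0 b)) - fine (mu (Wm 0 a)).
Proof.
move=> a0 ab b1.
have HE := Dadd q Hmu a0 ab b1.
rewrite (mufin Hmu (mWm q 0 b)) (mufin Hmu (mWm q 0 a)) (mufin Hmu (mWm q a b)) -EFinD in HE.
have HE2 := EFin_inj HE; lra.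
Qed.

Lemma dd_mono x y : 0 <= x -> x <= y -> y <= 1 -> dd x <= dd y.
Proof.
move=> x0 xy y1; rewrite /dd; apply: ler_wpM2r.
  by rewrite invr_ge0 ltW // TT_gt0.
have := Wfine x0 xy y1; have := fine_ge0' (mWm q x y); lra.
Qed.

Lemma dd0 : dd 0 = 0.
Proof. by rewrite /dd D0 /= mul0r. Qed.

Lemma dd1 : dd 1 = 1.
Proof. by rewrite /dd (D1 q Hmu) -/TT divff // gt_eqF // TT_gt0. Qed.

Lemma dd_cont x e : 0 <= x <= 1 -> 0 < e -> exists2 d, 0 < d &
  forall y, 0 <= y <= 1 -> `|x - y| < d -> `|dd x - dd y| < e.
Proof.
move=> hx e0.
have T0 := TT_gt0.
have [d d0 Hd] := Wcont q Hmu hx (mulr_gt0 e0 T0).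
exists d => // y hy xy.
have := Hd y hy xy.
move: hx hy => /andP[x0 x1] /andP[y0 y1].
have key u v : 0 <= u -> u <= v -> v <= 1 -> fine (mu (Wm u v)) < e * TT ->
    `|dd u - dd v| < e.
  move=> u0 uv v1 h.
  rewrite distrC ger0_norm; last by rewrite subr_ge0; apply: dd_mono.
  rewrite /dd -mulrBl -(Wfine u0 uv v1) ltr_pdivrMr //.
case: (leP x y) => hxy.
  exact: key.
rewrite (Wm_sym q x y) distrC => h; apply: key => //; exact: ltW.
Qed.

Lemma dd_bis a b : 0 <= a -> a < b -> b <= 1 -> (a, b) <> (0, 1) ->
  dd b - dd a = 2^-1 -> bisects2 mu (Lt q a) (Lt q b).
Proof.
move=> a0 ab b1 nab h.
have nE := lines_distinct (q:=q) a0 ab b1 nab.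
rewrite /bisects2 (Rplus2E nE) (Rminus2E nE) (muC q Hmu).
have T0 := TT_gt0.
have hW : fine (mu (Wm a b)) = TT / 2.
  rewrite (Wfine a0 (ltW ab) b1).
  move: h; rewrite /dd -mulrBl => /(congr1 (fun v => v * TT)).
  rewrite divfK ?gt_eqF // => ->; ring.
rewrite (mufin Hmu (mWm q a b)) (mufin Hmu measurableT) -/TT hW -EFinB.
congr (_%:E); lra.
Qed.

End Meas4.

Theorem theorem5 (R : realType) (mu1 mu2 : {measure set (R * R) -> \bar R})
  (q : R * R) :
  mass_distribution mu1 -> mass_distribution mu2 ->
  exists l1 l2 : R * R * R,
    [/\ nondeg l1, nondeg l2, aff l1 q = 0 & aff l2 q = 0] /\
    (bisects2 mu1 l1 l2 /\ bisects2 mu2 l1 l2).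
Proof.
move=> H1 H2.
have cd : forall x e, 0 <= x <= 1 -> 0 < e -> exists2 d, 0 < d &
      forall y, 0 <= y <= 1 -> `|x - y| < d ->
        `|dd q mu1 x - dd q mu1 y| < e /\ `|dd q mu2 x - dd q mu2 y| < e.
  move=> x e hx e0.
  have [d1 d10 Hd1] := dd_cont q H1 hx e0.
  have [d2 d20 Hd2] := dd_cont q H2 hx e0.
  exists (Num.min d1 d2); first by rewrite lt_min d10 d20.
  move=> y hy; rewrite lt_min => /andP[y1 y2]; split; [exact: Hd1 | exact: Hd2].
have [a [b [a0 ab b1 nab [h1 h2]]]] := oneD (dd_mono q H1) (dd_mono q H2)
  (dd0 q mu1) (dd0 q mu2) (dd1 q H1) (dd1 q H2) cd.
exists (Lt q a), (Lt q b); split.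
  by split; [exact: Lt_nondeg | exact: Lt_nondeg | exact: Lt_q | exact: Lt_q].
by split; apply: dd_bis.
Qed.
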